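(* Let $k\in\mathbb{Z}$ with $k<-2$ and put $j=k/2$. Then $D^{k,1}_0\cong D^{+,k}_{k/2}/W^+_{k/2}$ and $D^{k,-1}_0\cong D^{-,k}_{k/2}/W^-_{k/2}$, where $W^\pm_{k/2}\subset D^{\pm,k}_{k/2}$ is the $\mathcal{U}(\widehat{\mathfrak{sl}}_2)$-submodule generated by $J^\mp_{-1}(1\otimes|k/2,0\rangle_\pm)$.
   Context: $\mathfrak{sl}_2$ has basis $J^+,J^-,J^0$ with $[J^+,J^-]=J^0$, $[J^0,J^\pm]=\pm2J^\pm$. For $j\in-\tfrac12\mathbb{N}$, $D^+_j$ is the $\mathfrak{sl}_2$-module with basis $\{|j,m\rangle_+\}_{m\ge0}$, $J^0|j,m\rangle_+=2(m-j)|j,m\rangle_+$, $J^+|j,m\rangle_+=\sqrt{(m+1)(m-2j)}|j,m+1\rangle_+$, $J^-|j,m\rangle_+=-\sqrt{m(m-1-2j)}|j,m-1\rangle_+$; $D^-_j$ has basis $\{|j,m\rangle_-\}_{m\ge0}$, $J^0|j,m\rangle_-=2(j-m)|j,m\rangle_-$, $J^+|j,m\rangle_-=-\sqrt{m(m-1-2j)}|j,m-1\rangle_-$, $J^-|j,m\rangle_-=\sqrt{(m+1)(m-2j)}|j,m+1\rangle_-$; $D_0=\mathbb{C}$ is the trivial module. $\widehat{\mathfrak{sl}}_2$ has generators $J^a_n$ ($a\in\{+,-,0\}$, $n\in\mathbb{Z}$), $K$, $d$ with $[J^+_m,J^-_n]=J^0_{m+n}+Km\delta_{m+n,0}$, $[J^0_m,J^\pm_n]=\pm2J^\pm_{m+n}$,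 $[J^0_m,J^0_n]=2Km\delta_{m+n,0}$, $[J^\pm_m,J^\pm_n]=0$, $[d,J^a_n]=nJ^a_n$, $K$ central; $J^a_0$ is identified with $J^a$. With $\mathfrak{r}_+=\mathrm{span}\{J^a_n:n\ge1\}$, $\mathfrak{k}=\mathrm{span}\{J^a_0,K,d\}$, the prolongation of $V\in\{D^\pm_j,D_0\}$ at level $k\neq-2$ is $V^k=\mathcal{U}(\widehat{\mathfrak{sl}}_2)\otimes_{\mathcal{U}(\mathfrak{k}\oplus\mathfrak{r}_+)}V^{(k)}$, where on $V^{(k)}=V$ the element $K$ acts as $k$, $\mathfrak{r}_+$ as $0$, and $d$ by the scalar $-\frac{j(j+1)}{k+2}$ (for $D^\pm_j$) resp. $0$ (for $D_0$). Write $D^{\pm,k}_j=(D^\pm_j)^k$. The spectral flow automorphism $\vartheta_s$ ($s\in\mathbb{Z}$) is $J^\pm_n\mapsto J^\pm_{n\mp s}$, $J^0_n\mapsto J^0_n-sK\delta_{n,0}$, $K\mapsto K$, $d\mapsto d+\frac s2J^0_0-\frac{s^2}4K$; for a module $(W,\rho)$, $W^s=(W,\rho\circ\vartheta_s)$, and $D^{k,s}_0=((D_0)^k)^s$. *)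

(* Defs.v *)
From HB Require Import structures.
From mathcomp Require Import all_boot all_order all_algebra.
Set Implicit Arguments. Unset Strict Implicit. Unset Printing Implicit Defensive.
Import Order.TTheory GRing.Theory Num.Theory.
Local Open Scope ring_scope.

Section Affine.
Variable C : numClosedFieldType.

Record affact (V : Type) := AffAct {
  aJp : int -> V -> V;
  aJm : int -> V -> V;
  aJ0 : int -> V -> V;
  aK  : V -> V;
  ad  : V -> V }.

Record sl2act (V : Type) := SL2Act {
  sJp : V -> V;
  sJm : V -> V;
  sJ0 : V -> V }.

Definition linmap (V W : lmodType C) (f : V -> W) : Prop :=
  forall (a : C) (u v : V), f (a *: u + v) = a *: f u + f v.

Record is_affmod (V : lmodType C) (A : affact V) : Prop := {
  lin_Jp : forall n, linmap (aJp A n);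
  lin_Jm : forall n, linmap (aJm A n);
  lin_J0 : forall n, linmap (aJ0 A n);
  lin_K  : linmap (aK A);
  lin_d  : linmap (ad A);
  br_pm : forall m n v, aJp A m (aJm A n v) - aJm A n (aJp A m v)
            = aJ0 A (m + n) v + (if m + n == 0 then m%:~R *: aK A v else 0);
  br_0p : forall m n v, aJ0 A m (aJp A n v) - aJp A n (aJ0 A m v)
            = 2 *: aJp A (m + n) v;
  br_0m : forall m n v, aJ0 A m (aJm A n v) - aJm A n (aJ0 A m v)
            = - (2 *: aJm A (m + n) v);
  br_00 : forall m n v, aJ0 A m (aJ0 A n v) - aJ0 A n (aJ0 A m v)
            = (if m + n == 0 then (2 * m%:~R) *: aK A v else 0);
  br_pp : forall m n v, aJp A m (aJp A n v) - aJp A n (aJp A m v) = 0;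
  br_mm : forall m n v, aJm A m (aJm A n v) - aJm A n (aJm A m v) = 0;
  br_dp : forall n v, ad A (aJp A n v) - aJp A n (ad A v) = n%:~R *: aJp A n v;
  br_dm : forall n v, ad A (aJm A n v) - aJm A n (ad A v) = n%:~R *: aJm A n v;
  br_d0 : forall n v, ad A (aJ0 A n v) - aJ0 A n (ad A v) = n%:~R *: aJ0 A n v;
  br_Kp : forall n v, aK A (aJp A n v) = aJp A n (aK A v);
  br_Km : forall n v, aK A (aJm A n v) = aJm A n (aK A v);
  br_K0 : forall n v, aK A (aJ0 A n v) = aJ0 A n (aK A v);
  br_Kd : forall v, aK A (ad A v) = ad A (aK A v) }.

Definition is_affhom (V W : lmodType C) (A : affact V) (B : affact W)
    (f : V -> W) : Prop :=
  linmap f /\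
  (forall n v, f (aJp A n v) = aJp B n (f v)) /\
  (forall n v, f (aJm A n v) = aJm B n (f v)) /\
  (forall n v, f (aJ0 A n v) = aJ0 B n (f v)) /\
  (forall v, f (aK A v) = aK B (f v)) /\
  (forall v, f (ad A v) = ad B (f v)).

(* f : V^(k) -> N is a homomorphism of (k + r_+)-modules, where on V^(k)
   J^a_0 acts as J^a, K as k, d as the scalar h and r_+ as 0. *)
Definition is_parhom (V W : lmodType C) (s : sl2act V) (k h : C)
    (B : affact W) (f : V -> W) : Prop :=
  linmap f /\
  (forall v, f (sJp s v) = aJp B 0 (f v)) /\
  (forall v, f (sJm s v) = aJm B 0 (f v)) /\
  (forall v, f (sJ0 s v) = aJ0 B 0 (f v)) /\
  (forall v, aK B (f v) = k *: f v) /\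
  (forall v, ad B (f v) = h *: f v) /\
  (forall n v, 0 < n ->
     [/\ aJp B n (f v) = 0, aJm B n (f v) = 0 & aJ0 B n (f v) = 0]).

(* (M, A, iota) is the prolongation V^k = U(g) (x)_{U(k + r_+)} V^(k), with
   iota v = 1 (x) v, characterized by the universal property of the induced
   module. *)
Definition is_prolongation (V : lmodType C) (s : sl2act V) (k h : C)
    (M : lmodType C) (A : affact M) (iota : V -> M) : Prop :=
  is_affmod A /\ is_parhom s k h A iota /\
  forall (N : lmodType C) (B : affact N), is_affmod B ->
  forall f : V -> N, is_parhom s k h B f ->
    exists g : M -> N, [/\ is_affhom A B g, (forall v, g (iota v) = f v) &
      forall g' : M -> N, is_affhom A B g' -> (forall v, g' (iota v) = f v) ->
        forall x, g' x = g x].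

Definition sflow (V : lmodType C) (s : int) (A : affact V) : affact V :=
  AffAct (fun n => aJp A (n - s)) (fun n => aJm A (n + s))
    (fun n v => if n == 0 then aJ0 A 0 v - s%:~R *: aK A v else aJ0 A n v)
    (aK A)
    (fun v => ad A v + (s%:~R / 2) *: aJ0 A 0 v - (s%:~R ^+ 2 / 4) *: aK A v).

Definition gen_sub (M : lmodType C) (A : affact M) (w : M) (x : M) : Prop :=
  forall P : M -> Prop, P w -> P 0 ->
    (forall (a : C) u v, P u -> P v -> P (a *: u + v)) ->
    (forall n u, P u -> P (aJp A n u)) ->
    (forall n u, P u -> P (aJm A n u)) ->
    (forall n u, P u -> P (aJ0 A n u)) ->
    (forall u, P u -> P (aK A u)) ->
    (forall u, P u -> P (ad A u)) -> P x.

(* D^+_j and D^-_j, realized on {poly C}: the basis vector |j,m>_+- is 'X^m *)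
Definition Dplus (j : C) : sl2act {poly C} := SL2Act
  (fun p : {poly C} => \sum_(m < size p)
      (p`_m * sqrtC ((m.+1)%:R * (m%:R - 2 * j))) *: ('X^(m.+1) : {poly C}))
  (fun p : {poly C} => \sum_(m < size p)
      (- (p`_m * sqrtC (m%:R * (m%:R - 1 - 2 * j)))) *: ('X^(m.-1) : {poly C}))
  (fun p : {poly C} => \sum_(m < size p) (p`_m * (2 * (m%:R - j))) *: ('X^m : {poly C})).

Definition Dminus (j : C) : sl2act {poly C} := SL2Act
  (fun p : {poly C} => \sum_(m < size p)
      (- (p`_m * sqrtC (m%:R * (m%:R - 1 - 2 * j)))) *: ('X^(m.-1) : {poly C}))
  (fun p : {poly C} => \sum_(m < size p)
      (p`_m * sqrtC ((m.+1)%:R * (m%:R - 2 * j))) *: ('X^(m.+1) : {poly C}))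
  (fun p : {poly C} => \sum_(m < size p) (p`_m * (2 * (j - m%:R))) *: ('X^m : {poly C})).

Definition D0 : sl2act C^o := SL2Act (fun _ => 0) (fun _ => 0) (fun _ => 0).

End Affine.

(* Main.v *)
Require Import Defs.
From HB Require Import structures.
From mathcomp Require Import all_boot all_order all_algebra.
From mathcomp Require Import ring zify ring_quotient generic_quotient.
From Stdlib Require Import ClassicalEpsilon.
Import Order.TTheory GRing.Theory Num.Theory.
Local Open Scope ring_scope.

Set Implicit Arguments. Unset Strict Implicit. Unset Printing Implicit Defensive.

Section Lin.
Variable C : numClosedFieldType.

Section L1.
Variables (V W : lmodType C) (f : V -> W) (hf : linmap f).
Lemma lin0 : f 0 = 0.
Proof. have := hf 1 0 0; rewrite scaler0 add0r scale1r => /eqP; by rewrite -subr_eq subrr eq_sym => /eqP. Qed.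
Lemma linD u v : f (u + v) = f u + f v.
Proof. by have := hf 1 u v; rewrite !scale1r. Qed.
Lemma linZ a u : f (a *: u) = a *: f u.
Proof. by have := hf a u 0; rewrite !addr0 lin0 addr0. Qed.
Lemma linN u : f (- u) = - f u.
Proof. by rewrite -scaleN1r linZ scaleN1r. Qed.
Lemma linB u v : f (u - v) = f u - f v.
Proof. by rewrite linD linN. Qed.
Lemma lin_sum I (r : seq I) (P : pred I) (F : I -> V) :
  f (\sum_(i <- r | P i) F i) = \sum_(i <- r | P i) f (F i).
Proof.
elim/big_rec2: _ => [|i y x _ <-]; first exact: lin0.
by rewrite linD.
Qed.
End L1.

Lemma linmap_comp (U V W : lmodType C) (f : V -> W) (g : U -> V) :
  linmap f -> linmap g -> linmap (f \o g).
Proof. by move=> hf hg a u v /=; rewrite hg hf. Qed.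

Lemma linmap_id (U : lmodType C) : linmap (@id U).
Proof. by []. Qed.

Definition acteq (V : Type) (A B : affact V) :=
  [/\ forall n v, aJp A n v = aJp B n v, forall n v, aJm A n v = aJm B n v,
      forall n v, aJ0 A n v = aJ0 B n v, forall v, aK A v = aK B v
    & forall v, ad A v = ad B v].

Lemma affhom_ext (V W : lmodType C) (A A' : affact V) (B B' : affact W) f :
  acteq A A' -> acteq B B' -> is_affhom A B f -> is_affhom A' B' f.
Proof.
case=> e1 e2 e3 e4 e5 [] f1 f2 f3 f4 f5 [h1 [h2 [h3 [h4 [h5 h6]]]]].
split=> //; split=> [n v|]; first by rewrite -e1 -f1.
split=> [n v|]; first by rewrite -e2 -f2.
split=> [n v|]; first by rewrite -e3 -f3.
split=> [v|v]; first by rewrite -e4 -f4.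
by rewrite -e5 -f5.
Qed.

Lemma affhom_comp (U V W : lmodType C) (A : affact U) (B : affact V) (D : affact W) f g :
  is_affhom B D f -> is_affhom A B g -> is_affhom A D (f \o g).
Proof.
move=> [l1 [a1 [b1 [c1 [d1 e1]]]]] [l2 [a2 [b2 [c2 [d2 e2]]]]].
split; first exact: linmap_comp.
by do ![split] => *; rewrite /= ?a2 ?a1 ?b2 ?b1 ?c2 ?c1 ?d2 ?d1 ?e2 ?e1.
Qed.

Lemma affhom_id (U : lmodType C) (A : affact U) : is_affhom A A id.
Proof. by do ![split]. Qed.

End Lin.

Section SQZ.
Variables (C : comNzRingType) (V : lmodType C).
Definition sqz := (C * V)%type.
HB.instance Definition _ := GRing.Zmodule.on sqz.
Definition sqz_one : sqz := (1, 0).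
Definition sqz_mul (p q : sqz) : sqz := (p.1 * q.1, p.1 *: q.2 + q.1 *: p.2).
Lemma sqz_mulA : associative sqz_mul.
Proof.
case=> a x [b y] [c z]; rewrite /sqz_mul /=; congr pair; first by rewrite mulrA.
by rewrite !scalerDr !scalerA (mulrC c a) (mulrC c b) !addrA.
Qed.
Lemma sqz_mulC : commutative sqz_mul.
Proof. by case=> a x [b y]; rewrite /sqz_mul /= mulrC addrC. Qed.
Lemma sqz_mul1 : left_id sqz_one sqz_mul.
Proof. by case=> a x; rewrite /sqz_mul /= mul1r scale1r scaler0 addr0. Qed.
Lemma sqz_mulDl : left_distributive sqz_mul +%R.
Proof.
case=> a x [b y] [c z]; rewrite /sqz_mul /=; congr pair; first by rewrite mulrDl.
by rewrite scalerDl scalerDr addrACA.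
Qed.
Lemma sqz_one_neq0 : sqz_one != 0.
Proof. by rewrite /sqz_one xpair_eqE oner_eq0. Qed.
HB.instance Definition _ := GRing.Zmodule_isComNzRing.Build sqz
  sqz_mulA sqz_mulC sqz_mul1 sqz_mulDl sqz_one_neq0.

Definition inj (x : V) : sqz := (0, x).
Definition emb (c : C) : sqz := (c, 0).
Lemma inj_inj x y : inj x = inj y -> x = y.
Proof. by case. Qed.
Lemma injD x y : inj (x + y) = inj x + inj y.
Proof. by rewrite /inj; congr pair; rewrite /= addr0. Qed.
Lemma injN x : inj (- x) = - inj x.
Proof. by rewrite /inj; congr pair; rewrite /= oppr0. Qed.
Lemma inj0 : inj 0 = 0.
Proof. by []. Qed.
Lemma injZ c x : inj (c *: x) = emb c * inj x.
Proof.
rewrite /inj /emb; apply/eqP; rewrite xpair_eqE /=.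
by rewrite mulr0 scaler0 addr0 !eqxx.
Qed.
Lemma emb_is_zmod_morphism : zmod_morphism emb.
Proof. by move=> a b; rewrite /emb; congr pair; rewrite /= subrr. Qed.
Lemma emb_is_monoid_morphism : monoid_morphism emb.
Proof.
split=> // a b; rewrite /emb; apply/eqP; rewrite xpair_eqE /=.
by rewrite !scaler0 addr0 !eqxx.
Qed.
HB.instance Definition _ := GRing.isZmodMorphism.Build C sqz emb emb_is_zmod_morphism.
HB.instance Definition _ := GRing.isMonoidMorphism.Build C sqz emb emb_is_monoid_morphism.
End SQZ.

Ltac modeq := apply: inj_inj; rewrite ?(injD, injN, injZ, inj0); ring.

Goal forall (C : fieldType) (V : lmodType C) (a : C) (x y : V), a *: (x + y) - a *: x = a *: y.
Proof. move=> C V a x y. modeq. Qed.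
Goal forall (C : fieldType) (V : lmodType C) (a : C) (x y : V), (a * 2) *: x = a *: x + a *: x.
Proof. move=> C V a x y. modeq. Qed.

Section SF.
Variable C : numClosedFieldType.

Lemma linmap_add (V W : lmodType C) (f g : V -> W) :
  linmap f -> linmap g -> linmap (fun v => f v + g v).
Proof. by move=> hf hg a u v; rewrite hf hg scalerDr addrACA. Qed.

Lemma linmap_sub (V W : lmodType C) (f g : V -> W) :
  linmap f -> linmap g -> linmap (fun v => f v - g v).
Proof. by move=> hf hg a u v; rewrite hf hg scalerBr opprD addrACA. Qed.

Lemma linmap_scale (V W : lmodType C) (c : C) (f : V -> W) :
  linmap f -> linmap (fun v => c *: f v).
Proof. by move=> hf a u v; rewrite hf scalerDr !scalerA mulrC. Qed.

Variables (V : lmodType C) (A : affact V) (hA : is_affmod A).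

Let lJp n := lin_Jp hA n.
Let lJm n := lin_Jm hA n.
Let lJ0 n := lin_J0 hA n.
Let lK := lin_K hA.
Let ld := lin_d hA.


Lemma subr_eqD (x y z : V) : x - y = z -> x = y + z.
Proof. by move=> <-; rewrite addrC subrK. Qed.

Lemma JpJm m n v : aJp A m (aJm A n v) = aJm A n (aJp A m v) +
   (aJ0 A (m + n) v + (if m + n == 0 then m%:~R *: aK A v else 0)).
Proof. exact/subr_eqD/(br_pm hA). Qed.
Lemma JmJp m n v : aJm A n (aJp A m v) = aJp A m (aJm A n v) -
   (aJ0 A (m + n) v + (if m + n == 0 then m%:~R *: aK A v else 0)).
Proof. by rewrite JpJm addrK. Qed.
Lemma J0Jp m n v : aJ0 A m (aJp A n v) = aJp A n (aJ0 A m v) + 2 *: aJp A (m + n) v.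
Proof. exact/subr_eqD/(br_0p hA). Qed.
Lemma J0Jm m n v : aJ0 A m (aJm A n v) = aJm A n (aJ0 A m v) - 2 *: aJm A (m + n) v.
Proof. exact/subr_eqD/(br_0m hA). Qed.
Lemma J0J0 m n v : aJ0 A m (aJ0 A n v) = aJ0 A n (aJ0 A m v) +
   (if m + n == 0 then (2 * m%:~R) *: aK A v else 0).
Proof. exact/subr_eqD/(br_00 hA). Qed.
Lemma JpJp m n v : aJp A m (aJp A n v) = aJp A n (aJp A m v).
Proof. by apply/eqP; rewrite -subr_eq0 (br_pp hA). Qed.
Lemma JmJm m n v : aJm A m (aJm A n v) = aJm A n (aJm A m v).
Proof. by apply/eqP; rewrite -subr_eq0 (br_mm hA). Qed.
Lemma dJp n v : ad A (aJp A n v) = aJp A n (ad A v) + n%:~R *: aJp A n v.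
Proof. exact/subr_eqD/(br_dp hA). Qed.
Lemma dJm n v : ad A (aJm A n v) = aJm A n (ad A v) + n%:~R *: aJm A n v.
Proof. exact/subr_eqD/(br_dm hA). Qed.
Lemma dJ0 n v : ad A (aJ0 A n v) = aJ0 A n (ad A v) + n%:~R *: aJ0 A n v.
Proof. exact/subr_eqD/(br_d0 hA). Qed.

Lemma J00K v : aJ0 A 0 (aK A v) = aK A (aJ0 A 0 v).
Proof. by rewrite (br_K0 hA). Qed.

Ltac linE := repeat first [
  rewrite (linB (lJp _)) | rewrite (linD (lJp _)) | rewrite (linZ (lJp _)) | rewrite (linN (lJp _)) | rewrite (lin0 (lJp _)) |
  rewrite (linB (lJm _)) | rewrite (linD (lJm _)) | rewrite (linZ (lJm _)) | rewrite (linN (lJm _)) | rewrite (lin0 (lJm _)) |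
  rewrite (linB (lJ0 _)) | rewrite (linD (lJ0 _)) | rewrite (linZ (lJ0 _)) | rewrite (linN (lJ0 _)) | rewrite (lin0 (lJ0 _)) |
  rewrite (linB lK) | rewrite (linD lK) | rewrite (linZ lK) | rewrite (linN lK) | rewrite (lin0 lK) |
  rewrite (linB ld) | rewrite (linD ld) | rewrite (linZ ld) | rewrite (linN ld) | rewrite (lin0 ld) ].

Lemma sflow_affmod (s : int) : is_affmod (sflow s A).
Proof.
have lJ0' : forall n, linmap (fun v => if n == 0 then aJ0 A 0 v - s%:~R *: aK A v
                                        else aJ0 A n v).
  move=> n; case: eqP => _ //.
  by apply: linmap_sub => //; apply: linmap_scale.
split => //=.
- by apply: linmap_sub; [apply: linmap_add|]; [| apply: linmap_scale..].
- move=> m n v; rewrite (br_pm hA).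
  have -> : m - s + (n + s) = m + n by lia.
  case: eqP => [mn0|]; last by rewrite !addr0.
  rewrite mn0 rmorphB /=; modeq.
- move=> m n v; case: eqP => [->|_]; last by rewrite (br_0p hA) addrA.
  linE; rewrite J0Jp (br_Kp hA) !add0r; modeq.
- move=> m n v; case: eqP => [->|_]; last by rewrite (br_0m hA) addrA.
  linE; rewrite J0Jm (br_Km hA) !add0r; modeq.
- move=> m n v; case: (m =P 0) => [->|m0]; case: (n =P 0) => [->|n0] /=.
  + by rewrite subrr mulr0 scale0r.
  + linE; rewrite J0J0 (br_K0 hA) add0r; case: eqP => // _; modeq.
  + linE; rewrite J0J0 (br_K0 hA) addr0; case: eqP => // _; modeq.
  + exact: (br_00 hA).
- by move=> *; rewrite (br_pp hA).
- by move=> *; rewrite (br_mm hA).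
- move=> n v; linE; rewrite dJp J0Jp (br_Kp hA) !add0r.
  rewrite ?scalerDr ?scalerN ?scalerA divfK ?pnatr_eq0 // rmorphB /=; modeq.
- move=> n v; linE; rewrite dJm J0Jm (br_Km hA) !add0r.
  rewrite ?scalerDr ?scalerN ?scalerA divfK ?pnatr_eq0 // rmorphD /=; modeq.
- move=> n v; case: eqP => [->|n0]; linE; rewrite !dJ0 ?(br_K0 hA) ?(br_Kd hA).
    by rewrite !scale0r; modeq.
  rewrite (J0J0 0 n) add0r; move/eqP: n0 => /negPf ->; modeq.
- by move=> *; rewrite (br_Kp hA).
- by move=> *; rewrite (br_Km hA).
- move=> n v; case: eqP => _; linE; rewrite ?(br_K0 hA) //.
- by move=> v; linE; rewrite (br_Kd hA) (br_K0 hA).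
Qed.
End SF.

Module QMod.
Local Open Scope quotient_scope.
Import ring_quotient.Quotient.

Section QQ.
Variables (C : fieldType) (V : lmodType C) (W : V -> Prop).
Hypothesis W0 : W 0.
Hypothesis Wl : forall a u v, W u -> W v -> W (a *: u + v).
Definition Wb (x : V) : bool := if excluded_middle_informative (W x) then true else false.
Lemma WbP x : reflect (W x) (Wb x).
Proof. rewrite /Wb; case: excluded_middle_informative => h; by constructor. Qed.
Lemma Wb_zmod : zmod_closed Wb.
Proof.
split; first by apply/WbP.
move=> x y /WbP hx /WbP hy; apply/WbP.
have := Wl (-1) hy hx; by rewrite scaleN1r addrC.
Qed.
Definition Wpred : {pred V} := Wb.
HB.instance Definition _ := GRing.isZmodClosed.Build V Wpred Wb_zmod.
Definition Qt := ring_quotient.Quotient.quot Wpred.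
HB.instance Definition _ := GRing.Zmodule.on Qt.
HB.instance Definition _ := Choice.on Qt.

Definition proj (x : V) : Qt := \pi_Qt x.
Definition qrepr (q : Qt) : V := repr q.

Lemma projK q : proj (qrepr q) = q.
Proof. exact: reprK. Qed.

Lemma projP x y : proj x = proj y <-> W (x - y).
Proof.
have e := @idealrBE V Wpred x y.
split=> [h|/WbP h].
  by apply/WbP; have -> : Wb (x - y) = (x - y \in Wpred) by []; rewrite e; apply/eqP.
by apply/eqP; rewrite -e.
Qed.

Lemma WZ a u : W u -> W (a *: u).
Proof. by move=> h; have := Wl a h W0; rewrite addr0. Qed.
Lemma WD u v : W u -> W v -> W (u + v).
Proof. by move=> h1 h2; have := Wl 1 h1 h2; rewrite scale1r. Qed.
Lemma WN u : W u -> W (- u).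
Proof. by move=> h; have := WZ (-1) h; rewrite scaleN1r. Qed.

Lemma projD x y : proj (x + y) = proj x + proj y.
Proof. rewrite /proj. exact: raddfD. Qed.
Lemma proj0 : proj 0 = 0.
Proof. by rewrite /proj raddf0. Qed.
Lemma projN x : proj (- x) = - proj x.
Proof. by rewrite /proj raddfN. Qed.
Lemma projB x y : proj (x - y) = proj x - proj y.
Proof. by rewrite projD projN. Qed.

Lemma proj_eq0 x : proj x = 0 <-> W x.
Proof. by rewrite -proj0 projP subr0. Qed.

Lemma repr_proj x : W (qrepr (proj x) - x).
Proof. by apply/projP; rewrite projK. Qed.

Definition qscale (a : C) (q : Qt) : Qt := proj (a *: qrepr q).
Lemma projZ a x : proj (a *: x) = qscale a (proj x).
Proof. by apply/projP; rewrite -scalerBr; apply: WZ; apply/projP; rewrite projK. Qed.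

Lemma qscaleA a b q : qscale a (qscale b q) = qscale (a * b) q.
Proof. by rewrite -[q]projK -!projZ scalerA. Qed.
Lemma qscale1 : left_id 1 qscale.
Proof. by move=> q; rewrite -[q]projK -projZ scale1r. Qed.
Lemma qscaleDr : right_distributive qscale +%R.
Proof. by move=> a p q; rewrite -[p]projK -[q]projK -projD -!projZ scalerDr projD. Qed.
Lemma qscaleDl v : {morph qscale^~ v : a b / a + b}.
Proof. by move=> a b; rewrite -[v]projK -!projZ scalerDl projD. Qed.

HB.instance Definition _ := GRing.Zmodule_isLmodule.Build C Qt qscaleA qscale1 qscaleDr qscaleDl.

Lemma projZ' a x : proj (a *: x) = a *: proj x.
Proof. exact: projZ. Qed.

Lemma proj_lin : forall a u v, proj (a *: u + v) = a *: proj u + proj v.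
Proof. by move=> a u v; rewrite projD projZ'. Qed.

End QQ.

End QMod.
Import QMod.

Section QAct.
Variable C : numClosedFieldType.
Variables (M : lmodType C) (A : affact M) (hA : is_affmod A).
Variables (W : M -> Prop) (W0 : W 0) (Wl : forall a u v, W u -> W v -> W (a *: u + v)).
Hypothesis WJp : forall n u, W u -> W (aJp A n u).
Hypothesis WJm : forall n u, W u -> W (aJm A n u).
Hypothesis WJ0 : forall n u, W u -> W (aJ0 A n u).
Hypothesis WK : forall u, W u -> W (aK A u).
Hypothesis Wd : forall u, W u -> W (ad A u).

Local Notation Qt := (Qt W0 Wl).
Local Notation proj := (proj W0 Wl).
Local Notation qrepr := (@qrepr _ _ W W0 Wl).

Definition QAct : affact Qt := AffAct
  (fun n q => proj (aJp A n (qrepr q))) (fun n q => proj (aJm A n (qrepr q)))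
  (fun n q => proj (aJ0 A n (qrepr q))) (fun q => proj (aK A (qrepr q)))
  (fun q => proj (ad A (qrepr q))).

Lemma projF (F : M -> M) : linmap F -> (forall u, W u -> W (F u)) ->
  forall x, proj (F (qrepr (proj x))) = proj (F x).
Proof. move=> hF hW x; apply/projP. rewrite -(linB hF). apply: hW. exact: repr_proj. Qed.

Let pJp n := projF (lin_Jp hA n) (WJp n).
Let pJm n := projF (lin_Jm hA n) (WJm n).
Let pJ0 n := projF (lin_J0 hA n) (WJ0 n).
Let pK := projF (lin_K hA) WK.
Let pd := projF (lin_d hA) Wd.

Lemma proj_lmap : linmap proj.
Proof. by move=> a u v; rewrite proj_lin. Qed.

Lemma QAct_hom : is_affhom A QAct proj.
Proof.
split; first exact: proj_lmap.
by do ![split] => *; rewrite /= ?pJp ?pJm ?pJ0 ?pK ?pd.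
Qed.

Lemma QAct_lin (F : M -> M) : linmap F -> (forall u, W u -> W (F u)) ->
  linmap (fun q => proj (F (qrepr q))).
Proof.
move=> hF hW a u v.
have e : a *: u + v = proj (a *: qrepr u + qrepr v) by rewrite projD projZ' !projK.
by rewrite e projF // hF projD projZ'.
Qed.

Lemma QAct_affmod : is_affmod QAct.
Proof.
split=> /=.
- by move=> n; exact: QAct_lin (lin_Jp hA n) (WJp n).
- by move=> n; exact: QAct_lin (lin_Jm hA n) (WJm n).
- by move=> n; exact: QAct_lin (lin_J0 hA n) (WJ0 n).
- exact: QAct_lin (lin_K hA) WK.
- exact: QAct_lin (lin_d hA) Wd.
- move=> m n v; rewrite pJp pJm -projB (br_pm hA) projD.
  by case: eqP => _; rewrite ?projZ' ?proj0.
- by move=> m n v; rewrite pJp pJ0 -projB (br_0p hA) projZ'.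
- by move=> m n v; rewrite pJm pJ0 -projB (br_0m hA) projN projZ'.
- move=> m n v; rewrite !pJ0 -projB (br_00 hA).
  by case: eqP => _; rewrite ?projZ' ?proj0.
- by move=> m n v; rewrite !pJp -projB (br_pp hA) proj0.
- by move=> m n v; rewrite !pJm -projB (br_mm hA) proj0.
- by move=> n v; rewrite pJp pd -projB (br_dp hA) projZ'.
- by move=> n v; rewrite pJm pd -projB (br_dm hA) projZ'.
- by move=> n v; rewrite pJ0 pd -projB (br_d0 hA) projZ'.
- by move=> n v; rewrite pJp pK (br_Kp hA).
- by move=> n v; rewrite pJm pK (br_Km hA).
- by move=> n v; rewrite pJ0 pK (br_K0 hA).
- by move=> v; rewrite pd pK (br_Kd hA).
Qed.

End QAct.

Section G.
Variable C : numClosedFieldType.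

Lemma affhom_sflow (V W : lmodType C) (A : affact V) (B : affact W) g (s : int) :
  is_affhom A B g -> is_affhom (sflow s A) (sflow s B) g.
Proof.
move=> [hg [h1 [h2 [h3 [h4 h5]]]]].
split=> //; split=> [n v|] /=; first exact: h1.
split=> [n v|] /=; first exact: h2.
split=> [n v|] /=; first by case: eqP => _; rewrite ?(linB hg) ?(linZ hg) h3 ?h4.
split=> [v|v] /=; first exact: h4.
by rewrite (linB hg) (linD hg) !(linZ hg) h5 h3 h4.
Qed.

Lemma combo (V : lmodType C) (x y z : V) (a1 b1 a2 c b2 : C) :
  a1 + a2 = 0 -> b1 + a2 * c + b2 = 0 ->
  x + a1 *: y - b1 *: z + a2 *: (y - c *: z) - b2 *: z = x.
Proof.
move=> h1 h2.
have -> : b2 = - b1 - a2 * c.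
  by apply/eqP; rewrite -subr_eq0 -h2; apply/eqP; ring.
have -> : a2 = - a1 by apply/eqP; rewrite -subr_eq0 opprK addrC h1.
modeq.
Qed.

Lemma sflow_m1_1 (V : lmodType C) (B : affact V) : acteq (sflow 1 (sflow (-1) B)) B.
Proof.
split=> [n v|n v|n v|v|v] /=.
- by have -> : n - 1 - -1 = n by lia.
- by have -> : n + 1 + -1 = n by lia.
- by case: n => [[|n]|n] //=; modeq.
- by [].
- rewrite ?mulrN1z ?mulr1z sqrrN expr1n.
  by apply: combo; field.
Qed.

Lemma sflow_1_m1 (V : lmodType C) (B : affact V) : acteq (sflow (-1) (sflow 1 B)) B.
Proof.
split=> [n v|n v|n v|v|v] /=.
- by have -> : n - -1 - 1 = n by lia.
- by have -> : n + -1 + 1 = n by lia.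
- by case: n => [[|n]|n] //=; modeq.
- by [].
- rewrite ?mulrN1z ?mulr1z sqrrN expr1n.
  by apply: combo; field.
Qed.

Lemma parhom_comp (V W N : lmodType C) (s : sl2act V) (k h : C) (B : affact W) (B' : affact N)
  (f : V -> W) (g : W -> N) :
  is_affhom B B' g -> is_parhom s k h B f -> is_parhom s k h B' (g \o f).
Proof.
move=> [hg [g1 [g2 [g3 [g4 g5]]]]] [hf [f1 [f2 [f3 [f4 [f5 f6]]]]]].
split; first exact: linmap_comp.
do 5?[split] => /=.
- by move=> v; rewrite f1 g1.
- by move=> v; rewrite f2 g2.
- by move=> v; rewrite f3 g3.
- by move=> v; rewrite -g4 f4 (linZ hg).
- by move=> v; rewrite -g5 f5 (linZ hg).
- move=> n v hn; case: (f6 n v hn) => e1 e2 e3.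
  by rewrite -g1 -g2 -g3 e1 e2 e3 (lin0 hg).
Qed.

Lemma sflowJp (V : lmodType C) (A : affact V) s n v : aJp (sflow s A) n v = aJp A (n - s) v.
Proof. by []. Qed.
Lemma sflowJm (V : lmodType C) (A : affact V) s n v : aJm (sflow s A) n v = aJm A (n + s) v.
Proof. by []. Qed.
Lemma sflowJ0 (V : lmodType C) (A : affact V) s n v : aJ0 (sflow s A) n v =
  if n == 0 then aJ0 A 0 v - s%:~R *: aK A v else aJ0 A n v.
Proof. by []. Qed.
Lemma sflowK (V : lmodType C) (A : affact V) s v : aK (sflow s A) v = aK A v.
Proof. by []. Qed.
Lemma sflowd (V : lmodType C) (A : affact V) s v : ad (sflow s A) v =
  ad A v + (s%:~R / 2) *: aJ0 A 0 v - (s%:~R ^+ 2 / 4) *: aK A v.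
Proof. by []. Qed.
Lemma D0Jp v : sJp (D0 C) v = 0. Proof. by []. Qed.
Lemma D0Jm v : sJm (D0 C) v = 0. Proof. by []. Qed.
Lemma D0J0 v : sJ0 (D0 C) v = 0. Proof. by []. Qed.

Lemma acteq_refl (V : Type) (A : affact V) : acteq A A.
Proof. by []. Qed.

End G.

Section D.
Variable C : numClosedFieldType.
Variables (k : int) (hk : k < -2).
Variables (M0 : lmodType C) (A0 : affact M0) (i0 : C^o -> M0).
Hypotheses (hA : is_affmod A0) (hp : is_parhom (D0 C) k%:~R 0 A0 i0).

Local Notation kC := (k%:~R : C).

Definition sq (m : nat) : C := (m.+1)%:R * (m%:R - kC).
Definition sm (m : nat) : C := sqrtC ((m.+1)%:R * (m%:R - 2 * (kC / 2))).

Lemma two_half : 2 * (kC / 2) = kC.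
Proof. by rewrite mulrC divfK // pnatr_eq0. Qed.

Lemma smE m : sm m = sqrtC (sq m).
Proof. by rewrite /sm two_half. Qed.

Lemma sq_neq0 m : sq m != 0.
Proof.
rewrite /sq mulf_eq0 negb_or pnatr_eq0 /=.
have -> : (m%:R - kC : C) = (m%:Z - k)%:~R by rewrite rmorphB.
by rewrite intr_eq0; apply/eqP; lia.
Qed.

Lemma sm_sq m : sm m * sm m = sq m.
Proof. by rewrite smE -expr2 sqrtCK. Qed.

Lemma sm_neq0 m : sm m != 0.
Proof. by apply/eqP => h; move: (sm_sq m); rewrite h mul0r => /esym/eqP; rewrite (negPf (sq_neq0 m)). Qed.

Let lJp n := lin_Jp hA n.
Let lJm n := lin_Jm hA n.
Let lJ0 n := lin_J0 hA n.
Let lK := lin_K hA.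
Let ld := lin_d hA.
Let li0 : linmap i0 := proj1 hp.

Definition x0 : M0 := i0 1.

Lemma i00 : i0 0 = 0.
Proof. exact: lin0 li0. Qed.

Lemma Jp0x : aJp A0 0 x0 = 0.
Proof. by case: hp => _ [h _]; rewrite /x0 -h /= i00. Qed.
Lemma Jm0x : aJm A0 0 x0 = 0.
Proof. by case: hp => _ [_ [h _]]; rewrite /x0 -h /= i00. Qed.
Lemma J00x : aJ0 A0 0 x0 = 0.
Proof. by case: hp => _ [_ [_ [h _]]]; rewrite /x0 -h /= i00. Qed.
Lemma Kx : aK A0 x0 = kC *: x0.
Proof. by case: hp => _ [_ [_ [_ [h _]]]]; rewrite /x0 h. Qed.
Lemma dx : ad A0 x0 = 0.
Proof. by case: hp => _ [_ [_ [_ [_ [h _]]]]]; rewrite /x0 h scale0r. Qed.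
Lemma posx n : 0 < n -> [/\ aJp A0 n x0 = 0, aJm A0 n x0 = 0 & aJ0 A0 n x0 = 0].
Proof. by case: hp => _ [_ [_ [_ [_ [_ h]]]]]; apply: h. Qed.

Fixpoint u (m : nat) : M0 :=
  if m is m'.+1 then (sm m')^-1 *: aJp A0 (-1) (u m') else x0.

Lemma Jpu m : aJp A0 (-1) (u m) = sm m *: u m.+1.
Proof. by rewrite /= scalerA mulfV ?sm_neq0 // scale1r. Qed.

Lemma U4 m n : 0 <= n -> aJp A0 n (u m) = 0.
Proof.
move=> hn; elim: m => [|m IH] /=.
  by case: (ltgtP n 0) hn => // [hn _|->]; [case: (posx hn)|rewrite Jp0x].
by rewrite (linZ (lJp _)) (JpJp hA) IH (lin0 (lJp _)) scaler0.
Qed.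

Lemma U1 m : aK A0 (u m) = kC *: u m.
Proof.
elim: m => [|m IH] /=; first exact: Kx.
by rewrite (linZ lK) (br_Kp hA) IH (linZ (lJp _)) !scalerA mulrC.
Qed.

Lemma U2 m : aJ0 A0 0 (u m) = (2 * m%:R) *: u m.
Proof.
elim: m => [|m IH] /=; first by rewrite J00x mulr0 scale0r.
rewrite (linZ (lJ0 _)) (J0Jp hA) IH (linZ (lJp _)) add0r.
move: (sm m)^-1 => c; rewrite -natr1; modeq.
Qed.

Lemma U3 m : ad A0 (u m) = (- m%:R) *: u m.
Proof.
elim: m => [|m IH] /=; first by rewrite dx oppr0 scale0r.
rewrite (linZ ld) (dJp hA) IH (linZ (lJp _)).
move: (sm m)^-1 => c; rewrite -natr1; modeq.
Qed.

Lemma U5 m n : 0 < n -> aJ0 A0 n (u m) = 0.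
Proof.
move=> hn; elim: m => [|m IH] /=; first by case: (posx hn).
rewrite (linZ (lJ0 _)) (J0Jp hA) IH (lin0 (lJp _)) add0r U4 ?scaler0 //; lia.
Qed.

Lemma U6 m n : 1 < n -> aJm A0 n (u m) = 0.
Proof.
move=> hn; elim: m => [|m IH] /=; first by case: (posx (_ : 0 < n)) => //; lia.
rewrite (linZ (lJm _)) (JmJp hA) IH (lin0 (lJp _)) U5; last by lia.
have -> : (-1 + n == 0) = false by apply/eqP; lia.
by rewrite !addr0 subr0 scaler0.
Qed.

Lemma Jm1u0 : aJm A0 1 (u 0) = 0.
Proof. by case: (posx (_ : 0 < 1)). Qed.

Lemma U7aux m : aJm A0 1 (aJp A0 (-1) (u m)) = - sq m *: u m.
Proof.
have e : (-1 + 1 : int) = 0 by [].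
elim: m => [|m IH].
  rewrite (JmJp hA) e eqxx Jm1u0 (lin0 (lJp _)) /= J00x Kx /sq; modeq.
have U7m : aJm A0 1 (u m.+1) = - sm m *: u m.
  rewrite /= (linZ (lJm _)) IH scalerA -sm_sq; congr (_ *: _).
  by rewrite mulrN mulKf ?sm_neq0.
rewrite (JmJp hA) e eqxx U7m (linZ (lJp _)) Jpu U2 U1 scalerA.
rewrite (_ : - sm m * sm m = - sq m); last by rewrite mulNr sm_sq.
rewrite /sq -!natr1; modeq.
Qed.

Lemma U7 m : aJm A0 1 (u m.+1) = - sm m *: u m.
Proof.
rewrite /= (linZ (lJm _)) U7aux scalerA -sm_sq; congr (_ *: _).
by rewrite mulrN mulKf ?sm_neq0.
Qed.


Definition fD (p : {poly C}) : M0 := \sum_(m < size p) p`_m *: u m.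

Lemma fE (p : {poly C}) N : (size p <= N)%N -> fD p = \sum_(m < N) p`_m *: u m.
Proof.
move=> hN; rewrite /fD (big_ord_widen N (fun m => p`_m *: u m) hN) big_mkcond.
apply: eq_bigr => i _; case: ifP => // /negbT; rewrite -leqNgt => h.
by rewrite nth_default // scale0r.
Qed.

Lemma fD_lin : linmap fD.
Proof.
move=> a p q; set N := maxn (size p) (size q).
have hp' : (size p <= N)%N by rewrite leq_maxl.
have hq' : (size q <= N)%N by rewrite leq_maxr.
have hs : (size (a *: p + q)%R <= N)%N.
  by rewrite (leq_trans (size_polyD _ _)) // geq_max (leq_trans (size_scale_leq _ _)).
rewrite (fE hs) (fE hp') (fE hq') scaler_sumr -big_split /=.
by apply: eq_bigr => i _; rewrite coefD coefZ scalerDl scalerA.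
Qed.

Lemma fX m : fD 'X^m = u m.
Proof.
rewrite /fD size_polyXn big_ord_recr /= coefXn eqxx scale1r big1 ?add0r // => i _.
by rewrite coefXn ltn_eqF ?scale0r.
Qed.

Lemma f_eigen (G : M0 -> M0) (c : nat -> C) : linmap G ->
  (forall m, G (u m) = c m *: u m) ->
  forall p : {poly C}, G (fD p) = \sum_(m < size p) (p`_m * c m) *: u m.
Proof.
move=> hG hc p; rewrite /fD (lin_sum hG); apply: eq_bigr => i _.
by rewrite (linZ hG) hc scalerA.
Qed.

Lemma f_kill (G : M0 -> M0) : linmap G -> (forall m, G (u m) = 0) ->
  forall p : {poly C}, G (fD p) = 0.
Proof.
move=> hG hc p; rewrite (@f_eigen G (fun _ => 0)) //.
  by rewrite big1 // => i _; rewrite mulr0 scale0r.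
by move=> m; rewrite hc scale0r.
Qed.

Lemma f_sumX (p : {poly C}) (a : 'I_(size p) -> C) (g : 'I_(size p) -> nat) :
  fD (\sum_(m < size p) a m *: ('X^(g m) : {poly C})) = \sum_(m < size p) a m *: u (g m).
Proof.
rewrite (lin_sum fD_lin); apply: eq_bigr => i _.
by rewrite (linZ fD_lin) fX.
Qed.

Lemma kC2_neq0 : kC + 2 != 0.
Proof.
have -> : (kC + 2 : C) = (k + 2)%:~R by rewrite rmorphD.
by rewrite intr_eq0; apply/eqP; lia.
Qed.

Lemma f_parhom : is_parhom (Dplus (kC / 2)) kC (- ((kC / 2) * (kC / 2 + 1)) / (kC + 2))
                   (sflow 1 A0) fD.
Proof.
split; first exact: fD_lin.
split.
  move=> p /=; rewrite f_sumX sub0r /fD (lin_sum (lJp _)); apply: eq_bigr => i _.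
  by rewrite (linZ (lJp _)) Jpu [RHS]scalerA.
split.
  move=> p /=; rewrite f_sumX add0r /fD (lin_sum (lJm _)); apply: eq_bigr.
  case=> [[|m] hm] _ /=.
    by rewrite mul0r sqrtC0 mulr0 oppr0 scale0r (linZ (lJm _)) Jm1u0 scaler0.
  have -> : (m.+1%:R - 1 : C) = m%:R by rewrite -natr1 addrK.
  by rewrite (linZ (lJm _)) U7 scalerA mulrN.
split.
  move=> p /=; rewrite f_sumX.
  rewrite (@f_eigen (fun x => aJ0 A0 0 x - 1%:~R *: aK A0 x) (fun m => 2 * m%:R - kC)).
  - by apply: eq_bigr => i _; rewrite mulrBr two_half.
  - by apply: linmap_sub => //; apply: linmap_scale.
  - by move=> m; rewrite U2 U1 scalerA mul1r -scalerBl.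
split.
  move=> p /=; rewrite (@f_eigen (aK A0) (fun _ => kC)) //; last exact: U1.
  by rewrite /fD scaler_sumr; apply: eq_bigr => i _; rewrite scalerA mulrC.
split.
  move=> p; set h := (- _ / _).
  rewrite (@f_eigen (ad (sflow 1 A0)) (fun _ => h)).
  - by rewrite /fD scaler_sumr; apply: eq_bigr => i _; rewrite scalerA mulrC.
  - exact: (lin_d (sflow_affmod hA 1)).
  move=> m /=; rewrite U3 U2 U1 !scalerA -scalerDl -scalerBl; congr (_ *: _).
  rewrite /h; have := kC2_neq0; move: kC => x hx.
  by field.
move=> n p hn /=; split.
- by apply: f_kill => // m; apply: U4; lia.
- by apply: f_kill => // m; apply: U6; lia.
- have -> : (n == 0) = false by apply/eqP; lia.
  by apply: f_kill => // m; apply: U5.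
Qed.


Local Notation j := (kC / 2).
Local Notation hh := (- (j * (j + 1)) / (kC + 2)).

Variables (Mp : lmodType C) (Ap : affact Mp) (ip : {poly C} -> Mp).
Hypotheses (hAp : is_affmod Ap) (hip : is_parhom (Dplus j) kC hh Ap ip).
Hypothesis univp : forall (N : lmodType C) (B : affact N), is_affmod B ->
  forall f : {poly C} -> N, is_parhom (Dplus j) kC hh B f ->
    exists g : Mp -> N, [/\ is_affhom Ap B g, (forall v, g (ip v) = f v) &
      forall g' : Mp -> N, is_affhom Ap B g' -> (forall v, g' (ip v) = f v) ->
        forall x, g' x = g x].
Hypothesis univ0 : forall (N : lmodType C) (B : affact N), is_affmod B ->
  forall f : C^o -> N, is_parhom (D0 C) kC 0 B f ->
    exists g : M0 -> N, [/\ is_affhom A0 B g, (forall v, g (i0 v) = f v) &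
      forall g' : M0 -> N, is_affhom A0 B g' -> (forall v, g' (i0 v) = f v) ->
        forall x, g' x = g x].

Definition wv : Mp := aJm Ap (-1) (ip 1).
Definition W (x : Mp) : Prop := gen_sub Ap wv x.

Lemma Ww : W wv.
Proof. by move=> P. Qed.
Lemma W0 : W 0.
Proof. by move=> P. Qed.
Lemma Wl a u v : W u -> W v -> W (a *: u + v).
Proof. by move=> hu hv P h1 h2 h3 h4 h5 h6 h7 h8; apply: (h3); [exact: (hu P h1 h2 h3 h4 h5 h6 h7 h8) | exact: (hv P h1 h2 h3 h4 h5 h6 h7 h8)]. Qed.
Lemma WJp n x : W x -> W (aJp Ap n x).
Proof. by move=> hx P h1 h2 h3 h4 h5 h6 h7 h8; apply: (h4); exact: (hx P h1 h2 h3 h4 h5 h6 h7 h8). Qed.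
Lemma WJm n x : W x -> W (aJm Ap n x).
Proof. by move=> hx P h1 h2 h3 h4 h5 h6 h7 h8; apply: (h5); exact: (hx P h1 h2 h3 h4 h5 h6 h7 h8). Qed.
Lemma WJ0 n x : W x -> W (aJ0 Ap n x).
Proof. by move=> hx P h1 h2 h3 h4 h5 h6 h7 h8; apply: (h6); exact: (hx P h1 h2 h3 h4 h5 h6 h7 h8). Qed.
Lemma WK x : W x -> W (aK Ap x).
Proof. by move=> hx P h1 h2 h3 h4 h5 h6 h7 h8; apply: (h7); exact: (hx P h1 h2 h3 h4 h5 h6 h7 h8). Qed.
Lemma Wd x : W x -> W (ad Ap x).
Proof. by move=> hx P h1 h2 h3 h4 h5 h6 h7 h8; apply: (h8); exact: (hx P h1 h2 h3 h4 h5 h6 h7 h8). Qed.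

Local Notation Qm := (Qt W0 Wl).
Local Notation pr := (proj W0 Wl).
Local Notation qr := (@qrepr _ _ W W0 Wl).
Local Notation QA := (QAct Ap W0 Wl).

Lemma QA_aff : is_affmod QA.
Proof. exact: (@QAct_affmod _ _ _ hAp W W0 Wl WJp WJm WJ0 WK Wd). Qed.
Lemma QA_hom : is_affhom Ap QA pr.
Proof. exact: (@QAct_hom _ _ _ hAp W W0 Wl WJp WJm WJ0 WK Wd). Qed.

Definition yy (p : {poly C}) : Qm := pr (ip p).
Lemma yy_par : is_parhom (Dplus j) kC hh QA yy.
Proof. exact: parhom_comp QA_hom hip. Qed.

Lemma size1 : size (1 : {poly C}) = 1%N.
Proof. exact: size_poly1. Qed.

Lemma sJp1 : sJp (Dplus j) 1 = sm 0 *: 'X^1.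
Proof. by rewrite /= size1 big_ord1 coef1 /= mul1r. Qed.
Lemma sJm1 : sJm (Dplus j) 1 = 0.
Proof. by rewrite /= size1 big_ord1 coef1 /= !mul0r sqrtC0 mulr0 oppr0 scale0r. Qed.
Lemma sJ01 : sJ0 (Dplus j) 1 = (- kC) *: 1.
Proof. by rewrite /= size1 big_ord1 coef1 /= mul1r expr0 sub0r mulrN two_half. Qed.
Lemma sJpX m : sJp (Dplus j) 'X^m = sm m *: 'X^(m.+1).
Proof.
rewrite /= size_polyXn big_ord_recr /= coefXn eqxx mul1r big1 ?add0r // => i _.
by rewrite coefXn ltn_eqF ?mul0r ?scale0r.
Qed.

Lemma comb3 (V : lmodType C) (y : V) (c p a q b r : C) : p + a * q - b * r = 0 ->
  c *: (p *: y) + a *: (c *: (q *: y)) - b *: (c *: (r *: y)) = 0 *: (c *: y).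
Proof.
move=> h; have -> : p = b * r - a * q.
  by apply/eqP; rewrite -subr_eq0 -h; apply/eqP; ring.
modeq.
Qed.

Definition gg (c : C^o) : Qm := c *: yy 1.

Lemma gg_par : is_parhom (D0 C) kC 0 (sflow (-1) QA) gg.
Proof.
have [ylin [yJp [yJm [yJ0 [yK [yd ypos]]]]]] := yy_par.
have lQ := QA_aff.
rewrite /gg; split.
  by move=> a u v /=; rewrite scalerDl scalerA.
split.
  move=> c; rewrite ?sflowJp ?sflowJm ?sflowJ0 ?sflowK ?sflowd ?D0Jp ?D0Jm ?D0J0 ?eqxx; rewrite scale0r (linZ (lin_Jp lQ _)) sub0r opprK.
  by case: (ypos 1 1 isT) => -> _ _; rewrite scaler0.
split.
  move=> c; rewrite ?sflowJp ?sflowJm ?sflowJ0 ?sflowK ?sflowd ?D0Jp ?D0Jm ?D0J0 ?eqxx; rewrite scale0r (linZ (lin_Jm lQ _)) add0r.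
  have -> : aJm QA (-1) (yy 1) = 0.
    by case: QA_hom => _ [_ [h _]]; rewrite /yy -h; apply/proj_eq0; exact: Ww.
  by rewrite scaler0.
split.
  move=> c; rewrite ?sflowJp ?sflowJm ?sflowJ0 ?sflowK ?sflowd ?D0Jp ?D0Jm ?D0J0 ?eqxx; rewrite scale0r (linZ (lin_J0 lQ _)) (linZ (lin_K lQ)) -yJ0 sJ01 (linZ ylin) yK mulrN1z.
  modeq.
split.
  by move=> c; rewrite ?sflowJp ?sflowJm ?sflowJ0 ?sflowK ?sflowd ?D0Jp ?D0Jm ?D0J0 ?eqxx; rewrite (linZ (lin_K lQ)) yK; modeq.
split.
  move=> c; rewrite ?sflowJp ?sflowJm ?sflowJ0 ?sflowK ?sflowd ?D0Jp ?D0Jm ?D0J0 ?eqxx; rewrite (linZ (lin_d lQ)) (linZ (lin_J0 lQ _)) (linZ (lin_K lQ)) yd -yJ0 sJ01 (linZ ylin) yK.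
  apply: comb3; rewrite mulrN1z; have := kC2_neq0; move: kC => x hx; by field.
move=> n c hn; rewrite ?sflowJp ?sflowJm ?sflowJ0; split.
- rewrite (linZ (lin_Jp lQ _)); case: (ypos (n - -1) 1) => [|-> _ _]; last by rewrite scaler0.
  by rewrite opprK; lia.
- rewrite (linZ (lin_Jm lQ _)); have [->|n1] := eqVneq n 1.
    by rewrite addrN -yJm sJm1 (lin0 ylin) scaler0.
  case: (ypos (n + -1) 1) => [|_ -> _]; last by rewrite scaler0.
  by move/eqP: n1 => n1; lia.
- have -> : (n == 0) = false by apply/eqP; lia.
  rewrite (linZ (lin_J0 lQ _)).
  by case: (ypos n 1 hn) => _ _ ->; rewrite scaler0.
Qed.

Lemma fD1 : fD 1 = x0.
Proof. by rewrite -(expr0 'X) fX. Qed.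

Lemma psi_u (psi : M0 -> Qm) : is_affhom A0 (sflow (-1) QA) psi ->
  (forall c, psi (i0 c) = gg c) -> forall m, psi (u m) = yy 'X^m.
Proof.
move=> [hl [h1 _]] hi; have [ylin [yJp _]] := yy_par.
elim=> [|m IH].
  by rewrite /= /x0 hi /gg scale1r expr0.
rewrite [u _]/= (linZ hl) h1 sflowJp IH subrr -yJp sJpX (linZ ylin).
by rewrite scalerA mulVf ?sm_neq0 // scale1r.
Qed.

Lemma psi_fD (psi : M0 -> Qm) : is_affhom A0 (sflow (-1) QA) psi ->
  (forall c, psi (i0 c) = gg c) -> forall p, psi (fD p) = yy p.
Proof.
move=> hpsi hi p; have hl := proj1 hpsi; have ylin := proj1 yy_par.
have -> : yy p = yy (\sum_(i < size p) p`_i *: 'X^i) by rewrite -poly_def coefK.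
rewrite /fD (lin_sum hl) (lin_sum ylin).
by apply: eq_bigr => i _; rewrite (linZ hl) (linZ ylin) psi_u.
Qed.

Lemma phiW (phi : Mp -> M0) : is_affhom Ap (sflow 1 A0) phi ->
  (forall p, phi (ip p) = fD p) -> forall x, W x -> phi x = 0.
Proof.
move=> [hl [h1 [h2 [h3 [h4 h5]]]]] hi x hx; have lS := sflow_affmod hA 1.
apply: (hx (fun y => phi y = 0)).
- by rewrite /wv h2 hi fD1 sflowJm addNr Jm0x.
- exact: (lin0 hl).
- by move=> a u v hu hv; rewrite hl hu hv scaler0 addr0.
- by move=> n v hv; rewrite h1 hv (lin0 (lin_Jp lS _)).
- by move=> n v hv; rewrite h2 hv (lin0 (lin_Jm lS _)).
- by move=> n v hv; rewrite h3 hv (lin0 (lin_J0 lS _)).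
- by move=> v hv; rewrite h4 hv (lin0 (lin_K lS)).
- by move=> v hv; rewrite h5 hv (lin0 (lin_d lS)).
Qed.

Lemma induced (N : lmodType C) (B : affact N) (phi : Mp -> N) :
  is_affhom Ap B phi -> (forall x, W x -> phi x = 0) ->
  is_affhom QA B (phi \o qr) /\ forall x, phi (qr (pr x)) = phi x.
Proof.
move=> [hl [h1 [h2 [h3 [h4 h5]]]]] hW.
have E : forall x, phi (qr (pr x)) = phi x.
  by move=> x; apply/eqP; rewrite -subr_eq0 -(linB hl) hW //; apply: repr_proj.
split=> //; split.
  move=> a p q /=.
  have -> : a *: p + q = pr (a *: qr p + qr q) by rewrite projD projZ' !projK.
  by rewrite E hl.
by do ![split] => *; rewrite /= ?E ?h1 ?h2 ?h3 ?h4 ?h5.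
Qed.

Lemma part1_sec : exists phi : Mp -> M0,
  [/\ is_affhom Ap (sflow 1 A0) phi, (forall y, exists x, phi x = y) &
      (forall x, phi x = 0 <-> gen_sub Ap (aJm Ap (-1) (ip 1)) x)].
Proof.
have [phi [phihom phiip _]] := univp (sflow_affmod hA 1) f_parhom.
have [psi [psihom psii0 _]] := univ0 (sflow_affmod QA_aff (-1)) gg_par.
have hphiW := phiW phihom phiip.
have [hbar hbarE] := induced phihom hphiW.
have psilin := proj1 psihom.
exists phi; split => //.
- move=> y.
  have [g0 [_ _ uniq0]] := univ0 hA hp.
  have e1 := uniq0 id (affhom_id _) (fun _ => erefl).
  have rho_hom : is_affhom A0 A0 ((phi \o qr) \o psi).
    apply: affhom_comp psihom.
    apply: (affhom_ext (acteq_refl _) (sflow_1_m1 _)).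
    exact: affhom_sflow.
  have e2 := uniq0 _ rho_hom.
  have hr : forall c, ((phi \o qr) \o psi) (i0 c) = i0 c.
    move=> c /=; rewrite psii0 /gg /yy -projZ' hbarE (linZ (proj1 phihom)) phiip fD1 /x0.
    by rewrite -(linZ li0); congr i0; exact: (mulr1 (c : C)).
  by exists (qr (psi y)); have := e2 hr y; rewrite -e1.
- move=> x; split; last exact: hphiW.
  move=> h.
  have [g1 [_ _ uniq1]] := univp QA_aff yy_par.
  have e3 := uniq1 _ QA_hom (fun p => erefl).
  have hc : is_affhom Ap QA (psi \o phi).
    apply: affhom_comp phihom.
    apply: (affhom_ext (acteq_refl _) (sflow_m1_1 _)).
    exact: affhom_sflow.
  have e4 := uniq1 _ hc.
  apply/(proj_eq0 W0 Wl).
  rewrite e3 -e4 /= ?h ?(lin0 psilin) // => p.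
  by rewrite phiip (psi_fD psihom psii0).
Qed.

End D.

Section O.
Variable C : numClosedFieldType.

Definition omega (V : lmodType C) (A : affact V) : affact V :=
  AffAct (aJm A) (aJp A) (fun n v => - aJ0 A n v) (aK A) (ad A).
Definition omega_s (V : lmodType C) (s : sl2act V) : sl2act V :=
  SL2Act (sJm s) (sJp s) (fun v => - sJ0 s v).

Definition sleq (V : Type) (s s' : sl2act V) :=
  [/\ forall v, sJp s v = sJp s' v, forall v, sJm s v = sJm s' v & forall v, sJ0 s v = sJ0 s' v].

Lemma linmap_opp (V W : lmodType C) (f : V -> W) : linmap f -> linmap (fun v => - f v).
Proof. by move=> hf a u v; rewrite hf opprD scalerN. Qed.

Lemma omega_affmod (V : lmodType C) (A : affact V) : is_affmod A -> is_affmod (omega A).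
Proof.
move=> hA; have lJ0 := lin_J0 hA.
split=> /=.
- exact: lin_Jm hA.
- exact: lin_Jp hA.
- by move=> n; apply: linmap_opp.
- exact: lin_K hA.
- exact: lin_d hA.
- move=> m n v; rewrite -opprB (br_pm hA) opprD (addrC n m).
  case: eqP => [h|_]; last by rewrite oppr0.
  have -> : n = - m by lia.
  by rewrite rmorphN /= scaleNr opprK.
- by move=> m n v; rewrite (linN (lin_Jm hA _)) opprK addrC -opprB (br_0m hA) opprK.
- by move=> m n v; rewrite (linN (lin_Jp hA _)) opprK addrC -opprB (br_0p hA).
- by move=> m n v; rewrite !(linN (lJ0 _)) !opprK (br_00 hA).
- exact: br_mm hA.
- exact: br_pp hA.
- exact: br_dm hA.
- exact: br_dp hA.
- by move=> n v; rewrite (linN (lin_d hA)) opprK addrC -opprB (br_d0 hA) scalerN.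
- exact: br_Km hA.
- exact: br_Kp hA.
- by move=> n v; rewrite (linN (lin_K hA)) (br_K0 hA).
- exact: br_Kd hA.
Qed.

Lemma omega_hom (V W : lmodType C) (A : affact V) (B : affact W) g :
  is_affhom A B g -> is_affhom (omega A) (omega B) g.
Proof.
move=> [hg [h1 [h2 [h3 [h4 h5]]]]]; split=> //; split=> // ; split=> //.
by split=> [n v /=|//]; rewrite (linN hg) h3.
Qed.

Lemma omega_omega (V : lmodType C) (A : affact V) : acteq (omega (omega A)) A.
Proof. by split=> //= n v; rewrite opprK. Qed.

Lemma parhom_ext (V W : lmodType C) (s s' : sl2act V) k h (B B' : affact W) f :
  sleq s s' -> acteq B B' -> is_parhom s k h B f -> is_parhom s' k h B' f.
Proof.
case=> e1 e2 e3 [] b1 b2 b3 b4 b5 [hf [f1 [f2 [f3 [f4 [f5 f6]]]]]].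
split=> //; split=> [v|]; first by rewrite -e1 f1 b1.
split=> [v|]; first by rewrite -e2 f2 b2.
split=> [v|]; first by rewrite -e3 f3 b3.
split=> [v|]; first by rewrite -b4 f4.
split=> [v|n v hn]; first by rewrite -b5 f5.
by case: (f6 n v hn) => x1 x2 x3; rewrite -b1 -b2 -b3.
Qed.

Lemma omega_parhom (V W : lmodType C) (s : sl2act V) k h (B : affact W) f :
  is_parhom s k h B f -> is_parhom (omega_s s) k h (omega B) f.
Proof.
move=> [hf [f1 [f2 [f3 [f4 [f5 f6]]]]]].
split=> //; split=> //; split=> //; split=> [v /=|]; first by rewrite (linN hf) f3.
split=> //; split=> // n v hn; case: (f6 n v hn) => a1 a2 a3.
by split; rewrite /= ?a1 ?a2 ?a3 ?oppr0.
Qed.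

Lemma sleq_omega_omega (V : lmodType C) (s : sl2act V) : sleq (omega_s (omega_s s)) s.
Proof. by split=> //= v; rewrite opprK. Qed.

Lemma sleq_sym (V : Type) (s s' : sl2act V) : sleq s s' -> sleq s' s.
Proof. by case=> e1 e2 e3; split. Qed.

Lemma acteq_sym (V : Type) (A B : affact V) : acteq A B -> acteq B A.
Proof. by case=> e1 e2 e3 e4 e5; split. Qed.

Lemma prolong_ext (V : lmodType C) (s s' : sl2act V) k h (M : lmodType C) (A : affact M) iota :
  sleq s s' -> is_prolongation s k h A iota -> is_prolongation s' k h A iota.
Proof.
move=> e [hA [hi hu]]; split=> //; split; first exact: parhom_ext e (acteq_refl _) hi.
move=> N B hB f hf; have [g [g1 g2 g3]] := hu N B hB f (parhom_ext (sleq_sym e) (acteq_refl _) hf).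
by exists g; split.
Qed.

Lemma omega_prolong (V : lmodType C) (s : sl2act V) k h (M : lmodType C) (A : affact M) iota :
  is_prolongation s k h A iota -> is_prolongation (omega_s s) k h (omega A) iota.
Proof.
move=> [hA [hi hu]]; split; first exact: omega_affmod.
split; first exact: omega_parhom.
move=> N B hB f hf.
have hf' : is_parhom s k h (omega B) f.
  apply: parhom_ext (sleq_omega_omega s) (acteq_refl _) (omega_parhom hf).
have [g [g1 g2 g3]] := hu N (omega B) (omega_affmod hB) f hf'.
exists g; split => //.
  exact: affhom_ext (acteq_refl _) (omega_omega B) (omega_hom g1).
move=> g' hg' e; apply: g3 => //.
exact: affhom_ext (omega_omega A) (acteq_refl _) (omega_hom hg').
Qed.

Lemma omega_gen_sub (V : lmodType C) (A : affact V) w x :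
  gen_sub (omega A) w x -> gen_sub A w x.
Proof.
move=> hx P h1 h2 h3 h4 h5 h6 h7 h8; apply: hx => //= n u hu.
by rewrite -scaleN1r -[X in P X]addr0; apply: h3 => //; apply: h6.
Qed.

Lemma gen_sub_omega (V : lmodType C) (A : affact V) w x :
  gen_sub A w x -> gen_sub (omega A) w x.
Proof.
move=> hx P h1 h2 h3 h4 h5 h6 h7 h8; apply: hx => // n u hu.
by rewrite -[aJ0 A n u]opprK -scaleN1r -[X in P X]addr0; apply: h3 => //; apply: h6.
Qed.

Lemma omega_sflow (V : lmodType C) (A : affact V) :
  acteq (omega (sflow 1 (omega A))) (sflow (-1) A).
Proof.
split=> [n v|n v|n v|v|v] /=.
- by rewrite opprK.
- by [].
- case: n => [[|n]|n] //=; rewrite ?mulrN1z ?mulr1z; modeq.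
- by [].
- rewrite ?mulrN1z ?mulr1z sqrrN expr1n !mulNr; modeq.
Qed.

Lemma Dminus_omega (j : C) : sleq (omega_s (Dminus j)) (Dplus j).
Proof.
split=> // p /=; rewrite -sumrN; apply: eq_bigr => i _.
by rewrite -scaleNr -!mulrN opprB.
Qed.

Lemma D0_omega : sleq (omega_s (D0 C)) (D0 C).
Proof. by split=> // v /=; rewrite oppr0. Qed.

End O.

Unset Implicit Arguments. Set Strict Implicit.

Lemma part1 (C : numClosedFieldType) (k : int) (hk : k < -2)
  (Mp : lmodType C) (Ap : affact Mp) (ip : {poly C} -> Mp)
  (M0 : lmodType C) (A0 : affact M0) (i0 : C^o -> M0) :
  is_prolongation (Dplus (k%:~R / 2)) k%:~R
     (- (k%:~R / 2 * (k%:~R / 2 + 1)) / (k%:~R + 2)) Ap ip ->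
  is_prolongation (D0 C) k%:~R 0 A0 i0 ->
  exists phi : Mp -> M0,
      [/\ is_affhom Ap (sflow 1 A0) phi,
          (forall y, exists x, phi x = y) &
          (forall x, phi x = 0 <-> gen_sub Ap (aJm Ap (-1) (ip 1)) x)].
Proof.
move=> [hAp [hip univp]] [hA [hp univ0]].
exact: (part1_sec hk hA hp hAp hip univp univ0).
Qed.

Theorem proposition3p11 (C : numClosedFieldType) (k : int) (hk : k < -2)
  (Mp : lmodType C) (Ap : affact Mp) (ip : {poly C} -> Mp)
  (Mm : lmodType C) (Am : affact Mm) (im : {poly C} -> Mm)
  (M0 : lmodType C) (A0 : affact M0) (i0 : C^o -> M0) :
  let kC : C := k%:~R in
  let j : C := kC / 2 in
  let h : C := - (j * (j + 1)) / (kC + 2) in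
  is_prolongation (Dplus j) kC h Ap ip ->
  is_prolongation (Dminus j) kC h Am im ->
  is_prolongation (D0 C) kC 0 A0 i0 ->
  (exists phi : Mp -> M0,
      [/\ is_affhom Ap (sflow 1 A0) phi,
          (forall y, exists x, phi x = y) &
          (forall x, phi x = 0 <-> gen_sub Ap (aJm Ap (-1) (ip 1)) x)]) /\
  (exists phi : Mm -> M0,
      [/\ is_affhom Am (sflow (-1) A0) phi,
          (forall y, exists x, phi x = y) &
          (forall x, phi x = 0 <-> gen_sub Am (aJp Am (-1) (im 1)) x)]).
Proof.
move=> kC j h; subst kC j h => hp hm h0; split; first exact: (@part1 _ _ hk _ _ _ _ _ _ hp h0).
have hm' := prolong_ext (Dminus_omega _) (omega_prolong hm).
have h0' := prolong_ext (@D0_omega C) (omega_prolong h0).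
have [phi [ph surj ker]] := @part1 _ _ hk _ _ _ _ _ _ hm' h0'.
exists phi; split => //.
  exact: affhom_ext (omega_omega Am) (omega_sflow A0) (omega_hom ph).
move=> x; rewrite ker; split; [exact: omega_gen_sub | exact: gen_sub_omega].
Qed.
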